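(* Let $G$ be a graph and $v$ a vertex of $G$. Then $v$ is always-activated if and only if $nd(v)=0$, and $v$ is never-activated if and only if $nd(v)=1$.
   Context: For a finite simple graph $G$ with vertex set $\{v_1,\dots,v_n\}$, the closed adjacency matrix $N(G)$ is the $n\times n$ matrix over $\mathbb{Z}_2$ whose $(i,j)$ entry is $1$ iff $i=j$ or $v_i$ is adjacent to $v_j$. The nullity is $\nu(G):=\dim\operatorname{Ker}(N(G))$, with the convention $\nu(K_0)=0$ for the graph with no vertices; elements of the kernel are null patterns. The null difference of $v$ is $nd(v):=\nu(G-v)-\nu(G)$, where $G-v$ is $G$ with $v$ and its incident edges deleted. A vertex $v$ is half-activated if $\boldsymbol{\ell}(v)=1$ for some null pattern $\boldsymbol{\ell}$; otherwise it is always-activated if $\mathbf{p}(v)=1$ for every $\mathbf{p}\in\mathbb{Z}_2^{V(G)}$ with $N(G)\mathbf{p}=\mathbf{1}$ (the all-ones vector), and never-activated if $\mathbf{p}(v)=0$ for every such $\mathbf{p}$. *)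

(* Defs.v *)
From HB Require Import structures.
From mathcomp Require Import all_boot all_order all_algebra.
Set Implicit Arguments. Unset Strict Implicit. Unset Printing Implicit Defensive.
Import GRing.Theory.
Local Open Scope ring_scope.

Definition simple_graph (n : nat) (e : rel 'I_n) : Prop :=
  irreflexive e /\ symmetric e.

Definition closed_adj (n : nat) (e : rel 'I_n) : 'M['F_2]_n :=
  \matrix_(i, j) (if (i == j) || e i j then 1 else 0).

(* Nullity: dimension of Ker N(G) = {p | N p = 0}.  kermx A is the row kernel
   {u | u *m A = 0}, so the (column) kernel of N is the row kernel of N^T. *)
Definition nullity (n : nat) (e : rel 'I_n) : nat :=
  \rank (kermx (closed_adj e)^T).

Definition del_vertex (n : nat) (e : rel 'I_n.+1) (v : 'I_n.+1) : rel 'I_n :=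
  fun i j => e (lift v i) (lift v j).

Definition null_diff (n : nat) (e : rel 'I_n.+1) (v : 'I_n.+1) : int :=
  (nullity (del_vertex e v))%:Z - (nullity e)%:Z.

Definition null_pattern (n : nat) (e : rel 'I_n) (l : 'cV['F_2]_n) : Prop :=
  closed_adj e *m l = 0.

Definition half_activated (n : nat) (e : rel 'I_n) (v : 'I_n) : Prop :=
  exists l : 'cV['F_2]_n, null_pattern e l /\ l v 0 = 1.

Definition always_activated (n : nat) (e : rel 'I_n) (v : 'I_n) : Prop :=
  ~ half_activated e v /\
  forall p : 'cV['F_2]_n, closed_adj e *m p = const_mx 1 -> p v 0 = 1.

Definition never_activated (n : nat) (e : rel 'I_n) (v : 'I_n) : Prop :=
  ~ half_activated e v /\
  forall p : 'cV['F_2]_n, closed_adj e *m p = const_mx 1 -> p v 0 = 0.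

(* Main.v *)
Require Import Defs.
From HB Require Import structures.
From mathcomp Require Import all_boot all_order all_algebra zify.
Set Implicit Arguments. Unset Strict Implicit. Unset Printing Implicit Defensive.
Import GRing.Theory.
Local Open Scope ring_scope.

Lemma F2_sq (a : 'F_2) : a * a = a.
Proof. by case: a => [[|[|]]] //= ?; apply/val_inj. Qed.

Lemma F2_neq0 (a : 'F_2) : a != 0 -> a = 1.
Proof. by case: a => [[|[|]]] //= ? _; apply/val_inj. Qed.

Definition Dm n (v : 'I_n.+1) : 'M['F_2]_(n.+1, n) :=
  \matrix_(i, j) (i == lift v j)%:R.
Definition cv n (v : 'I_n.+1) : 'M['F_2]_(n.+1, 1) := delta_mx v 0.

Lemma DtD n (v : 'I_n.+1) : (Dm v)^T *m Dm v = 1%:M.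
Proof.
apply/matrixP=> j k; rewrite !mxE (bigD1 (lift v j)) //= big1 ?addr0.
  by rewrite !mxE eqxx (inj_eq (@lift_inj _ v)) mul1r.
by move=> i /negbTE ne; rewrite !mxE ne mul0r.
Qed.

Lemma DDt n (v : 'I_n.+1) : Dm v *m (Dm v)^T + cv v *m (cv v)^T = 1%:M.
Proof.
apply/matrixP=> i i'; rewrite !mxE big_ord1 !mxE.
case: (unliftP v i) => [j ->|->].
  rewrite (bigD1 j) //= big1 ?addr0; last first.
    by move=> k /negbTE ne; rewrite !mxE (inj_eq (@lift_inj _ v)) eq_sym ne mul0r.
  rewrite !mxE eqxx mul1r [lift v j == v]eq_sym (negbTE (neq_lift v j)) mul0r addr0.
  by rewrite eq_sym.
rewrite big1 ?add0r; last first.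
  by move=> k _; rewrite !mxE (negbTE (neq_lift v k)) mul0r.
by rewrite eqxx !andbT mul1r eq_sym.
Qed.

Lemma Dtc n (v : 'I_n.+1) : (Dm v)^T *m cv v = 0.
Proof.
apply/matrixP=> j k; rewrite !mxE big1 // => i _; rewrite !mxE.
by case: eqP => [->|]; rewrite ?mul0r // eq_sym (negbTE (neq_lift v j)) mulr0.
Qed.

Lemma F2_dbl (a : 'F_2) : a + a = 0.
Proof. by case: a => [[|[|]]] //= ?; apply/val_inj. Qed.

Lemma mx_dbl m k (M : 'M['F_2]_(m, k)) : M + M = 0.
Proof. by apply/matrixP=> i j; rewrite !mxE F2_dbl. Qed.

Lemma tr11 (M : 'M['F_2]_1) : M^T = M.
Proof. by rewrite [M]mx11_scalar tr_scalar_mx. Qed.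

Lemma L_ones m (x : 'rV['F_2]_m) : x *m x^T = x *m const_mx 1.
Proof.
by apply/matrixP=> i j; rewrite !mxE; apply: eq_bigr => k _; rewrite !mxE !ord1 F2_sq mulr1.
Qed.

Lemma L_quad m (N : 'M['F_2]_m) (x : 'rV['F_2]_m) :
  N^T = N -> (forall i, N i i = 1) -> x *m N *m x^T = x *m x^T.
Proof.
move=> sN dN.
pose U : 'M['F_2]_m := \matrix_(i, j) (if (i < j)%N then N i j else 0).
have -> : N = U + U^T + 1%:M.
  apply/matrixP=> i j; rewrite !mxE.
  case: (ltngtP i j) => [lt|gt|eq].
  - by rewrite addr0 (_ : (i == j) = false) ?addr0 // -val_eqE /= ltn_eqF.
  - rewrite add0r (_ : (i == j) = false) ?addr0; last by rewrite -val_eqE /= gtn_eqF.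
    by rewrite -[in LHS]sN mxE.
  - have eij : i = j by apply/val_inj.
    by rewrite eij eqxx !add0r dN.
rewrite !mulmxDr !mulmxDl mulmx1.
have -> : x *m U^T *m x^T = x *m U *m x^T.
  by rewrite -[RHS]tr11 !trmx_mul trmxK mulmxA.
by rewrite mx_dbl add0r.
Qed.

Lemma closed_adj_sym n (e : rel 'I_n) : symmetric e -> (closed_adj e)^T = closed_adj e.
Proof. by move=> se; apply/matrixP=> i j; rewrite !mxE eq_sym se. Qed.

Lemma closed_adj_diag n (e : rel 'I_n) i : closed_adj e i i = 1.
Proof. by rewrite mxE eqxx. Qed.

Lemma closed_adj_del n (e : rel 'I_n.+1) (v : 'I_n.+1) :
  closed_adj (del_vertex e v) = (Dm v)^T *m closed_adj e *m Dm v.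
Proof.
apply/matrixP=> j k; rewrite !mxE (bigD1 (lift v k)) //= big1 ?addr0; last first.
  by move=> i /negbTE ne; rewrite !mxE ne mulr0.
rewrite !mxE eqxx mulr1 (bigD1 (lift v j)) //= big1 ?addr0; last first.
  by move=> i /negbTE ne; rewrite !mxE ne mul0r.
by rewrite !mxE eqxx mul1r (inj_eq (@lift_inj _ v)).
Qed.

Lemma orth_sub m (N : 'M['F_2]_m) (y : 'rV['F_2]_m) :
  N^T = N -> kermx N *m y^T = 0 -> (y <= N)%MS.
Proof.
move=> sN Ky.
pose S := kermx (kermx N)^T.
have yS : (y <= S)%MS by apply/sub_kermxP; rewrite -[y]trmxK -trmx_mul Ky trmx0.
have NS : (N <= S)%MS.
  by apply/sub_kermxP; rewrite -{1}sN -trmx_mul mulmx_ker trmx0.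
have rS : \rank S = \rank N.
  rewrite /S mxrank_ker mxrank_tr mxrank_ker subKn //; exact: rank_leq_row.
have SN : (S <= N)%MS.
  by rewrite -(geq_leqif (mxrank_leqif_sup NS)) rS.
exact: submx_trans yS SN.
Qed.

Lemma rank_col m (M : 'M['F_2]_(m, 1)) : \rank M = (M != 0) :> nat.
Proof.
have := rank_leq_col M; rewrite -(mxrank_eq0 M).
by case: (\rank M) => [|[|]].
Qed.

Lemma F2_1x1 (M : 'M['F_2]_1) : M != 0 -> M = 1%:M.
Proof.
move=> nz; rewrite [M]mx11_scalar (@F2_neq0 (M 0 0)) //.
apply: contraNneq nz => M0; by apply/eqP/matrixP=> i j; rewrite !ord1 M0 mxE.
Qed.



Lemma ker_bridge m k (M : 'M['F_2]_(m, k)) (d : 'M['F_2]_(m, 1)) :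
  (kermx M *m d != 0) <-> exists u : 'rV_m, u *m M = 0 /\ (u *m d) 0 0 = 1.
Proof.
split.
  move=> nz; have [i Hi] : exists i, row i (kermx M) *m d != 0.
    apply/existsP; apply: contraNT nz; rewrite negb_exists => /forallP H.
    apply/eqP/row_matrixP => i; rewrite row_mul row0; exact/eqP/negbNE/H.
  exists (row i (kermx M)); split.
    exact/sub_kermxP/row_sub.
  by rewrite (F2_1x1 Hi) mxE eqxx.
case=> u [uM ud]; apply/negP => /eqP K0.
have /submxP [w uw] : (u <= kermx M)%MS by exact/sub_kermxP.
move: ud; rewrite uw -mulmxA K0 mulmx0 mxE => /eqP.
by rewrite eq_sym oner_eq0.
Qed.

Lemma XDE p n (v : 'I_n.+1) (X : 'M['F_2]_(p, n.+1)) :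
  X *m cv v = 0 -> X *m Dm v *m (Dm v)^T = X.
Proof.
move=> Xc; have := congr1 (mulmx X) (DDt v).
by rewrite mulmxDr mulmx1 !mulmxA Xc mul0mx addr0.
Qed.



Lemma WEN p n (v : 'I_n.+1) (N : 'M['F_2]_n.+1) (W : 'M['F_2]_(p, n)) :
  W *m ((Dm v)^T *m N *m Dm v) = 0 -> W *m ((Dm v)^T *m N *m cv v) = 0 ->
  W *m (Dm v)^T *m N = 0.
Proof.
move=> h1 h2; have := congr1 (mulmx (W *m (Dm v)^T *m N)) (DDt v).
rewrite mulmx1 => <-; rewrite mulmxDr !mulmxA.
move: h1 h2; rewrite !mulmxA => -> ->.
by rewrite !mul0mx addr0.
Qed.

Lemma rank_eq n (v : 'I_n.+1) (N : 'M['F_2]_n.+1) :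
  let N' := (Dm v)^T *m N *m Dm v in
  let b := (Dm v)^T *m N *m cv v in
  (\rank (kermx N') + \rank (kermx N *m cv v) =
   \rank (kermx N) + \rank (kermx N' *m b))%N.
Proof.
move=> N' b.
have h1 := mxrank_mul_ker (kermx N) (cv v).
have h2 := mxrank_mul_ker (kermx N') b.
set X := (kermx N :&: kermx (cv v))%MS in h1.
set W := (kermx N' :&: kermx b)%MS in h2.
have XN : X *m N = 0 by apply/sub_kermxP/capmxSl.
have Xc : X *m cv v = 0 by apply/sub_kermxP/capmxSr.
have WN : W *m N' = 0 by apply/sub_kermxP/capmxSl.
have Wb : W *m b = 0 by apply/sub_kermxP/capmxSr.
have XW : (X *m Dm v <= W)%MS.
  rewrite sub_capmx; apply/andP; split; apply/sub_kermxP.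
    by rewrite /N' !mulmxA XDE // XN mul0mx.
  by rewrite /b !mulmxA XDE // XN mul0mx.
have WX : (W *m (Dm v)^T <= X)%MS.
  rewrite sub_capmx; apply/andP; split; apply/sub_kermxP.
    exact: WEN.
  by rewrite -mulmxA Dtc mulmx0.
have r1 : (\rank X <= \rank W)%N.
  apply: leq_trans (mxrankS XW).
  by rewrite -{1}(XDE Xc) mxrankM_maxl.
have r2 : (\rank W <= \rank X)%N.
  apply: leq_trans (mxrankS WX).
  by rewrite -{1}[W]mulmx1 -(DtD v) mulmxA mxrankM_maxl.
have rXW : \rank X = \rank W by apply/eqP; rewrite eqn_leq r1 r2.
rewrite -h1 -h2 rXW; lia.
Qed.

Lemma ctq n (v : 'I_n.+1) (q : 'cV['F_2]_n.+1) : ((cv v)^T *m q) 0 0 = q v 0.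
Proof. by rewrite /cv trmx_delta -rowE mxE. Qed.

Lemma uc n (v : 'I_n.+1) (u : 'rV['F_2]_n.+1) : (u *m cv v) 0 0 = u 0 v.
Proof. by rewrite /cv -colE mxE. Qed.

Lemma P1 n (v : 'I_n.+1) (N : 'M['F_2]_n.+1) (u' : 'rV['F_2]_n) :
  N^T = N -> (forall i, N i i = 1) ->
  u' *m ((Dm v)^T *m N *m Dm v) = 0 -> (u' *m ((Dm v)^T *m N *m cv v)) 0 0 = 1 ->
  (forall q : 'cV['F_2]_n.+1, N *m q = const_mx 1 -> q v 0 = 0) /\
  (forall u : 'rV['F_2]_n.+1, u *m N = 0 -> u 0 v = 0).
Proof.
move=> sN dN h1 h2.
set x := u' *m (Dm v)^T.
have ub : u' *m ((Dm v)^T *m N *m cv v) = 1%:M by rewrite [LHS]mx11_scalar h2.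
have xN : x *m N = (cv v)^T.
  have := congr1 (mulmx (x *m N)) (DDt v); rewrite mulmx1 => <-.
  rewrite mulmxDr !mulmxA /x.
  move: h1 ub; rewrite !mulmxA => -> ->.
  by rewrite mul0mx add0r mul1mx.
have xc : x *m cv v = 0 by rewrite /x -mulmxA Dtc mulmx0.
split.
  move=> q Nq; rewrite -ctq -xN -mulmxA Nq -L_ones -(L_quad x sN dN) xN.
  by rewrite -[(cv v)^T *m x^T]trmxK trmx_mul !trmxK xc !mxE.
move=> u uN; rewrite -uc -[cv v]trmxK -xN trmx_mul sN mulmxA uN mul0mx mxE //.
Qed.

Lemma P3 n (N : 'M['F_2]_n) :
  N^T = N -> (forall i, N i i = 1) -> exists q : 'cV['F_2]_n, N *m q = const_mx 1.
Proof.
move=> sN dN.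
have Ky : kermx N *m (const_mx 1 : 'rV['F_2]_n)^T = 0.
  apply/row_matrixP=> i; rewrite row_mul row0.
  set u := row i (kermx N).
  have uN : u *m N = 0 by apply/sub_kermxP/row_sub.
  have -> : (const_mx 1 : 'rV['F_2]_n)^T = const_mx 1.
    by apply/matrixP=> a b; rewrite !mxE.
  by rewrite -L_ones -(L_quad u sN dN) uN mul0mx.
have /submxP [w yw] := orth_sub sN Ky.
exists w^T; rewrite -{1}sN -trmx_mul -yw.
by apply/matrixP=> a b; rewrite !mxE.
Qed.

Lemma P2 n (v : 'I_n.+1) (N : 'M['F_2]_n.+1) :
  N^T = N -> (forall i, N i i = 1) ->
  kermx N *m cv v = 0 ->
  kermx ((Dm v)^T *m N *m Dm v) *m ((Dm v)^T *m N *m cv v) = 0 ->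
  forall q : 'cV['F_2]_n.+1, N *m q = const_mx 1 -> q v 0 = 1.
Proof.
move=> sN dN Kc K'b q Nq.
have /submxP [w cw] : ((cv v)^T <= N)%MS by apply: orth_sub; rewrite // trmxK.
have wc : w *m cv v = 1%:M.
  apply: F2_1x1; apply/negP => /eqP wc0.
  have := K'b; apply/eqP; apply/ker_bridge; exists (w *m Dm v); split.
    rewrite !mulmxA (XDE wc0) -cw.
    by rewrite -[Dm v]trmxK -trmx_mul Dtc trmx0.
  rewrite !mulmxA (XDE wc0) -cw ctq /cv mxE !eqxx //.
rewrite -ctq cw -mulmxA Nq -L_ones -(L_quad w sN dN) -cw.
by rewrite -[(cv v)^T *m w^T]trmxK trmx_mul !trmxK wc !mxE eqxx.
Qed.
Unset Implicit Arguments.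

Theorem proposition2p6 (n : nat) (e : rel 'I_n.+1) (v : 'I_n.+1) :
  simple_graph e ->
  (always_activated e v <-> null_diff e v = 0) /\
  (never_activated e v <-> null_diff e v = 1).
Proof.
case=> _ se.
set N := closed_adj e.
have sN : N^T = N by apply: closed_adj_sym.
have dN : forall i, N i i = 1 by move=> i; apply: closed_adj_diag.
have sdel : symmetric (del_vertex e v) by move=> i j; rewrite /del_vertex se.
have nd : null_diff e v =
   (kermx ((Dm v)^T *m N *m Dm v) *m ((Dm v)^T *m N *m cv v) != 0)%:R
   - (kermx N *m cv v != 0)%:R.
  rewrite /null_diff /nullity closed_adj_sym // closed_adj_sym // closed_adj_del.
  have := rank_eq v N; rewrite /= !rank_col.
  move: (\rank _) (\rank _) (_ != 0) (_ != 0) => a b [] [] /= h; lia.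
have halfE : half_activated e v <-> (kermx N *m cv v != 0).
  rewrite ker_bridge; split.
    case=> l [Nl lv]; exists l^T; split.
      by move: Nl; rewrite /null_pattern -/N => Nl; rewrite -sN -trmx_mul Nl trmx0.
    by rewrite /cv -colE !mxE.
  case=> u [uN uv]; exists u^T; split.
    by rewrite /null_pattern -/N -sN -trmx_mul uN trmx0.
  by move: uv; rewrite /cv -colE !mxE.
have [q0 Nq0] := P3 sN dN.
case hK : (kermx N *m cv v != 0);
  case hK' : (kermx ((Dm v)^T *m N *m Dm v) *m ((Dm v)^T *m N *m cv v) != 0);
  rewrite hK hK' in nd.
- exfalso.
  have [u' [u'N u'b]] := (ker_bridge _ _).1 hK'.
  have [_ H] := P1 sN dN u'N u'b.
  have [u [uN uc1]] := (ker_bridge _ _).1 hK.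
  by move: uc1; rewrite /cv -colE mxE (H u uN) => /eqP; rewrite eq_sym oner_eq0.
- have ndv : null_diff e v = -1 by rewrite nd sub0r.
  have hh : half_activated e v by apply/halfE; rewrite hK.
  rewrite ndv; split; split; by [case | move/eqP].
- have [u' [u'N u'b]] := (ker_bridge _ _).1 hK'.
  have [H1 _] := P1 sN dN u'N u'b.
  have nh : ~ half_activated e v by rewrite halfE hK.
  have ndv : null_diff e v = 1 by rewrite nd subr0.
  rewrite ndv; split; split => //; try by move=> _; split => // q /H1.
  by case=> _ /(_ q0 Nq0); rewrite H1 // => /eqP; rewrite eq_sym oner_eq0.
- have nh : ~ half_activated e v by rewrite halfE hK.
  have H2 := P2 sN dN (eqP (negbFE hK)) (eqP (negbFE hK')).
  have ndv : null_diff e v = 0 by rewrite nd subr0.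
  rewrite ndv; split; split => //; try by move=> _; split => // q /H2.
  by case=> _ /(_ q0 Nq0); rewrite H2 // => /eqP; rewrite oner_eq0.
Qed.
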